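(* Let \[P=\{x\in[0,2]^2 : x_1+10x_2\le 20,\ 10x_1+x_2\le 20\},\] \[P_L=\{(x,z)\in\mathbb{R}^2\times[0,1]^4 : x\in P,\ x_i=z_{i1}+2z_{i2}\text{ for } i=1,2\},\] \[P_{L+}=\{(x,z)\in\mathbb{R}^2\times[0,1]^4 : x\in P,\ x_i=z_{i1}+2z_{i2},\ z_{i1}+z_{i2}\le1\text{ for } i=1,2\},\] where all variables of $P_L$ and $P_{L+}$ (both $x$ and $z$) are integer variables. Then \[\operatorname{proj}_x\big(\mathrm{SC}(P_{L+})\big)\subsetneq \operatorname{proj}_x\big(\mathrm{SC}(P_L)\big).\]
   Context: For $X\subseteq\mathbb{R}^N$ with all coordinates integer, the split closure is $\mathrm{SC}(X)=\bigcap\mathrm{conv}(X\setminus S)$, the intersection over all split sets $S=\{y\in\mathbb{R}^N:\pi_0<\pi^Ty<\pi_0+1\}$ with $\pi\in\mathbb{Z}^N$, $\pi_0\in\mathbb{Z}$. $\operatorname{proj}_x$ is orthogonal projection onto the $x$-coordinates. *)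

(* Defs.v *)
From mathcomp Require Import all_boot all_order all_algebra.
From mathcomp Require Import reals.
Set Implicit Arguments. Unset Strict Implicit. Unset Printing Implicit Defensive.
Import Order.TTheory GRing.Theory Num.Theory.
Local Open Scope ring_scope.

Section Defs.
Variable R : realType.

Definition pt (N : nat) := 'I_N -> R.

Definition conv (N : nat) (A : pt N -> Prop) : pt N -> Prop :=
  fun y => exists (k : nat) (lam : 'I_k -> R) (p : 'I_k -> pt N),
    (forall j, 0 <= lam j) /\ \sum_(j < k) lam j = 1 /\
    (forall j, A (p j)) /\
    (forall i, y i = \sum_(j < k) lam j * p j i).

Definition split_set (N : nat) (pi : 'I_N -> int) (pi0 : int) : pt N -> Prop :=
  fun y => pi0%:~R < \sum_(i < N) (pi i)%:~R * y i < (pi0 + 1)%:~R.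

(* Split closure (all coordinates integer). *)
Definition split_closure (N : nat) (X : pt N -> Prop) : pt N -> Prop :=
  fun y => forall (pi : 'I_N -> int) (pi0 : int),
    conv (fun p => X p /\ ~ split_set pi pi0 p) y.

(* Points of R^(2+4): coordinates (x1, x2, z11, z12, z21, z22). *)
Definition xc (y : pt (2 + 4)) (i : 'I_2) : R := y (lshift 4 i).
Definition zc (y : pt (2 + 4)) (j : 'I_4) : R := y (rshift 2 j).

Definition proj_x (A : pt (2 + 4) -> Prop) : pt 2 -> Prop :=
  fun x => exists y, A y /\ forall i : 'I_2, xc y i = x i.

Definition i0 : 'I_2 := @Ordinal 2 0 isT.
Definition i1 : 'I_2 := @Ordinal 2 1 isT.
Definition j0 : 'I_4 := @Ordinal 4 0 isT.
Definition j1 : 'I_4 := @Ordinal 4 1 isT.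
Definition j2 : 'I_4 := @Ordinal 4 2 isT.
Definition j3 : 'I_4 := @Ordinal 4 3 isT.

Definition inP (x : pt 2) : Prop :=
  (forall i, 0 <= x i <= 2) /\
  x i0 + 10 * x i1 <= 20 /\ 10 * x i0 + x i1 <= 20.

Definition PL (y : pt (2 + 4)) : Prop :=
  inP (xc y) /\ (forall j, 0 <= zc y j <= 1) /\
  xc y i0 = zc y j0 + 2 * zc y j1 /\
  xc y i1 = zc y j2 + 2 * zc y j3.

Definition PLplus (y : pt (2 + 4)) : Prop :=
  PL y /\ zc y j0 + zc y j1 <= 1 /\ zc y j2 + zc y j3 <= 1.

End Defs.

(* Main.v *)
Require Import Defs.
From mathcomp Require Import all_boot all_order all_algebra.
From mathcomp Require Import reals.
From mathcomp Require Import zify ring lra.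
Set Implicit Arguments. Unset Strict Implicit. Unset Printing Implicit Defensive.
Import Order.TTheory GRing.Theory Num.Theory.
Local Open Scope ring_scope.

Definition int4 := (int * int * int * int)%type.
Definition q4 := (rat * rat * rat * rat)%type.
Definition cert := (q4 * q4 * rat * int)%type.

Definition PLzb (F : numFieldType) (z1 z2 z3 z4 : F) : bool :=
  [&& 0 <= z1 <= 1, 0 <= z2 <= 1, 0 <= z3 <= 1, 0 <= z4 <= 1,
      0 <= z1 + 2 * z2 <= 2, 0 <= z3 + 2 * z4 <= 2,
      (z1 + 2 * z2) + 10 * (z3 + 2 * z4) <= 20 &
      10 * (z1 + 2 * z2) + (z3 + 2 * z4) <= 20].

Definition PLq (z : q4) : bool := let: (a, b, c, d) := z in PLzb a b c d.

Definition dotR (F : numFieldType) (E : int4) (a b c d : F) : F :=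
  let: (e1, e2, e3, e4) := E in
  e1%:~R * a + e2%:~R * b + e3%:~R * c + e4%:~R * d.

Definition dotq (E : int4) (z : q4) : rat := let: (a, b, c, d) := z in dotR E a b c d.

Definition dotz (E d : int4) : int :=
  let: (e1, e2, e3, e4) := E in let: (d1, d2, d3, d4) := d in
  e1 * d1 + e2 * d2 + e3 * d3 + e4 * d4.

Definition Yq : q4 := (1%:R / 2%:R, 3%:R / 10%:R, 1%:R / 2%:R, 3%:R / 10%:R).
Definition Y10 : int4 := (5%Z, 3%Z, 5%Z, 3%Z).

Definition eqcomb (l : rat) (A B : q4) : bool :=
  let: (a1, a2, a3, a4) := A in let: (b1, b2, b3, b4) := B in
  let: (y1, y2, y3, y4) := Yq in
  [&& y1 == l * a1 + (1 - l) * b1, y2 == l * a2 + (1 - l) * b2,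
      y3 == l * a3 + (1 - l) * b3 & y4 == l * a4 + (1 - l) * b4].

Definition cert_ok (E : int4) (C : cert) : bool :=
  let: (A, B, l, c) := C in
  [&& PLq A, PLq B, 0 <= l <= 1, eqcomb l A B,
      c%:~R + 1 <= dotq E A, dotq E B <= c%:~R &
      c%:~R < dotq E Yq < c%:~R + 1].

Definition dirp (s : rat) (d : int4) : q4 :=
  let: (y1, y2, y3, y4) := Yq in let: (d1, d2, d3, d4) := d in
  (y1 + s * d1%:~R / 20, y2 + s * d2%:~R / 20, y3 + s * d3%:~R / 20, y4 + s * d4%:~R / 20).
Lemma conv2 (R : realType) N (X : pt R N -> Prop) (a b y : pt R N) (l : R) :
  X a -> X b -> 0 <= l <= 1 -> (forall i, y i = l * a i + (1 - l) * b i) -> conv X y.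
Proof.
move=> Xa Xb /andP[l0 l1] hy.
exists 2%N, (fun j : 'I_2 => if j == ord0 then l else 1 - l),
  (fun j : 'I_2 => if j == ord0 then a else b).
split; first by move=> j; case: ifP => _ //; rewrite subr_ge0.
split; first by rewrite big_ord_recr big_ord1 /=; ring.
split; first by move=> j; case: ifP.
by move=> i; rewrite big_ord_recr big_ord1 /= hy.
Qed.

Lemma conv1 (R : realType) N (X : pt R N -> Prop) (y : pt R N) : X y -> conv X y.
Proof.
move=> Xy; exists 1%N, (fun _ => 1), (fun _ => y).
split; first by move=> j; exact: ler01.
split; first by rewrite big_ord1.
split; first by [].
by move=> i; rewrite big_ord1 mul1r.
Qed.

Lemma lin_conv (R : realType) N (X : pt R N -> Prop) (w : 'I_N -> R) (b : R) y :
  (forall p, X p -> \sum_i w i * p i <= b) -> conv X y -> \sum_i w i * y i <= b.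
Proof.
move=> H [k [lam [p [l0 [l1 [Xp hy]]]]]].
have -> : \sum_i w i * y i = \sum_j lam j * (\sum_i w i * p j i).
  under eq_bigr do rewrite hy mulr_sumr.
  rewrite exchange_big /=; apply: eq_bigr => j _; rewrite mulr_sumr.
  by apply: eq_bigr => i _; rewrite mulrCA.
rewrite -[b]mul1r -l1 mulr_suml; apply: ler_sum => j _.
by rewrite ler_wpM2l //; exact: H.
Qed.

Lemma sum6 (R : realType) (f : 'I_(2 + 4) -> R) :
  \sum_(i < 2 + 4) f i = f (lshift 4 i0) + f (lshift 4 i1) + f (rshift 2 j0)
    + f (rshift 2 j1) + f (rshift 2 j2) + f (rshift 2 j3).
Proof.
rewrite !big_ord_recl big_ord0 addr0 !addrA.
by congr (_ + _ + _ + _ + _ + _); congr f; apply/val_inj.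
Qed.

Definition mk (R : realType) (z1 z2 z3 z4 : R) : pt R (2 + 4) :=
  fun i => nth 0 [:: z1 + 2 * z2; z3 + 2 * z4; z1; z2; z3; z4] i.

Lemma PLz_PL (R : realType) (z1 z2 z3 z4 : R) : PLzb z1 z2 z3 z4 -> PL (mk z1 z2 z3 z4).
Proof.
move=> /and4P[/andP[h1 h1'] /andP[h2 h2'] /andP[h3 h3'] /and4P[/andP[h4 h4'] /andP[h5 h5'] /andP[h6 h6'] /andP[h7 h8]]].
split; last split; last split.
- split; last by rewrite /xc /=.
  move=> [[|[|//]] Hi]; rewrite /xc /mk /=; apply/andP; split => //.
- move=> [[|[|[|[|//]]]] Hi]; rewrite /zc /mk /=; apply/andP; split => //.
- by rewrite /xc /zc /mk /=.
- by rewrite /xc /zc /mk /=.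
Qed.

Lemma ratr_le (R : realType) (x y : rat) : x <= y -> ratr x <= ratr y :> R.
Proof. by rewrite ler_rat. Qed.
Lemma ratr_lt (R : realType) (x y : rat) : x < y -> ratr x < ratr y :> R.
Proof. by rewrite ltr_rat. Qed.

Lemma PLz_ratr (R : realType) (a b c d : rat) :
  PLzb a b c d -> PLzb (ratr a : R) (ratr b) (ratr c) (ratr d).
Proof.
move=> /and4P[/andP[h1 h1'] /andP[h2 h2'] /andP[h3 h3'] /and4P[/andP[h4 h4'] /andP[h5 h5'] /andP[h6 h6'] /andP[h7 h8]]].
move: h1 h1' h2 h2' h3 h3' h4 h4' h5 h5' h6 h6' h7 h8.
do 14 (move/(ratr_le R); rewrite ?rmorphD ?rmorphM ?rmorphD ?rmorphM ?rmorphD ?rmorph0 ?rmorph1 ?rmorph_nat => ?).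
rewrite /PLzb; repeat (apply/andP; split); lra.
Qed.

Definition mkq (R : realType) (z : q4) : pt R (2 + 4) :=
  let: (a, b, c, d) := z in mk (ratr a) (ratr b) (ratr c) (ratr d).

Lemma PLq_PL (R : realType) z : PLq z -> PL (mkq R z).
Proof. by case: z => [[[a b] c] d] /= /(PLz_ratr R) /PLz_PL. Qed.

Lemma dot_ratr (R : realType) E (a b c d : rat) :
  ratr (dotR E a b c d) = dotR E (ratr a : R) (ratr b) (ratr c) (ratr d).
Proof.
case: E => [[[e1 e2] e3] e4] /=.
by rewrite ?rmorphD ?rmorphM ?rmorphD ?rmorphM ?rmorphD ?rmorphM !rmorph_int.
Qed.

Definition Epi (pi : 'I_(2 + 4) -> int) : int4 :=
  (pi (rshift 2 j0) + pi (lshift 4 i0), pi (rshift 2 j1) + pi (lshift 4 i0) * 2%Z,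
   pi (rshift 2 j2) + pi (lshift 4 i1), pi (rshift 2 j3) + pi (lshift 4 i1) * 2%Z).

Lemma splitval (R : realType) pi (z1 z2 z3 z4 : R) :
  \sum_(i < 2 + 4) (pi i)%:~R * mk z1 z2 z3 z4 i = dotR (Epi pi) z1 z2 z3 z4.
Proof.
rewrite sum6 /mk /= !intrD !intrM.
ring.
Qed.

Lemma splitval_q (R : realType) pi z :
  \sum_(i < 2 + 4) (pi i)%:~R * mkq R z i = ratr (dotq (Epi pi) z).
Proof. by case: z => [[[a b] c] d]; rewrite /mkq splitval /dotq dot_ratr. Qed.
Lemma ratr_eq (R : realType) (y a b l : rat) :
  y = l * a + (1 - l) * b -> ratr y = ratr l * ratr a + (1 - ratr l) * ratr b :> R.
Proof. by move=> ->; rewrite rmorphD !rmorphM rmorphB rmorph1. Qed.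

Lemma two_point (R : realType) pi (pi0 : int) (A B : q4) (l : rat) :
  PLq A -> PLq B -> 0 <= l <= 1 -> eqcomb l A B ->
  (pi0%:~R + 1 <= ratr (dotq (Epi pi) A) :> R) -> (ratr (dotq (Epi pi) B) <= pi0%:~R :> R) ->
  conv (fun p => PL p /\ ~ split_set pi pi0 p) (mkq R Yq).
Proof.
move=> hA hB /andP[l0 l1] hE hA' hB'.
apply: (@conv2 _ _ _ (mkq R A) (mkq R B) _ (ratr l)).
- split; first exact: PLq_PL.
  rewrite /split_set splitval_q intrD => /andP[_]; lra.
- split; first exact: PLq_PL.
  rewrite /split_set splitval_q => /andP[h _]; by move: (lt_le_trans h hB'); rewrite ltxx.
- apply/andP; split; [move/(ratr_le R): l0; rewrite rmorph0 | move/(ratr_le R): l1; rewrite rmorph1] => //.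
- move: hE; case: A {hA hA'} => [[[a1 a2] a3] a4]; case: B {hB hB'} => [[[b1 b2] b3] b4].
  rewrite /eqcomb /= => /and4P[/eqP/(ratr_eq R) e1 /eqP/(ratr_eq R) e2 /eqP/(ratr_eq R) e3 /eqP/(ratr_eq R) e4].
  move=> [[|[|[|[|[|[|//]]]]]] Hi]; rewrite /mk /=.
  + rewrite e1 e2; ring.
  + rewrite e3 e4; ring.
  + by rewrite e1.
  + by rewrite e2.
  + by rewrite e3.
  + by rewrite e4.
Qed.
Definition Dl : seq int4 := [:: ((-10)%Z, (-3)%Z, (-10)%Z, (6)%Z);
  ((-10)%Z, (-3)%Z, (5)%Z, (6)%Z);
  ((-10)%Z, (-3)%Z, (10)%Z, (3)%Z);
  ((-10)%Z, (-2)%Z, (-10)%Z, (-2)%Z);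
  ((-10)%Z, (-2)%Z, (-2)%Z, (-6)%Z);
  ((-10)%Z, (-2)%Z, (10)%Z, (-6)%Z);
  ((-10)%Z, (6)%Z, (-10)%Z, (-3)%Z);
  ((-10)%Z, (6)%Z, (-10)%Z, (6)%Z);
  ((-10)%Z, (6)%Z, (-4)%Z, (-6)%Z);
  ((-10)%Z, (6)%Z, (3)%Z, (6)%Z);
  ((-10)%Z, (6)%Z, (10)%Z, (-6)%Z);
  ((-10)%Z, (6)%Z, (10)%Z, (2)%Z);
  ((-5)%Z, (-6)%Z, (5)%Z, (6)%Z);
  ((-5)%Z, (-6)%Z, (10)%Z, (3)%Z);
  ((-4)%Z, (-6)%Z, (-10)%Z, (6)%Z);
  ((-3)%Z, (-6)%Z, (10)%Z, (-6)%Z);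
  ((-2)%Z, (-6)%Z, (-10)%Z, (-2)%Z);
  ((-2)%Z, (-6)%Z, (-2)%Z, (-6)%Z);
  ((2)%Z, (6)%Z, (2)%Z, (6)%Z);
  ((2)%Z, (6)%Z, (10)%Z, (2)%Z);
  ((3)%Z, (6)%Z, (-10)%Z, (6)%Z);
  ((4)%Z, (6)%Z, (10)%Z, (-6)%Z);
  ((5)%Z, (6)%Z, (-10)%Z, (-3)%Z);
  ((5)%Z, (6)%Z, (-5)%Z, (-6)%Z);
  ((10)%Z, (-6)%Z, (-10)%Z, (-2)%Z);
  ((10)%Z, (-6)%Z, (-10)%Z, (6)%Z);
  ((10)%Z, (-6)%Z, (-3)%Z, (-6)%Z);
  ((10)%Z, (-6)%Z, (4)%Z, (6)%Z);
  ((10)%Z, (-6)%Z, (10)%Z, (-6)%Z);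
  ((10)%Z, (-6)%Z, (10)%Z, (3)%Z);
  ((10)%Z, (2)%Z, (-10)%Z, (6)%Z);
  ((10)%Z, (2)%Z, (2)%Z, (6)%Z);
  ((10)%Z, (2)%Z, (10)%Z, (2)%Z);
  ((10)%Z, (3)%Z, (-10)%Z, (-3)%Z);
  ((10)%Z, (3)%Z, (-5)%Z, (-6)%Z);
  ((10)%Z, (3)%Z, (10)%Z, (-6)%Z)].
Definition Cl : seq (int4 * cert) := [:: (((-1)%Z, (-2)%Z, (0)%Z, (0)%Z), (((fracq (40%Z, 101%Z)), (fracq (0%Z, 1%Z)), (fracq (90%Z, 101%Z)), (fracq (54%Z, 101%Z))), ((fracq (50%Z, 79%Z)), (fracq (54%Z, 79%Z)), (fracq (0%Z, 1%Z)), (fracq (0%Z, 1%Z))), (fracq (101%Z, 180%Z)), (-2)%Z));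
  (((-1)%Z, (-1)%Z, (0)%Z, (-1)%Z), (((fracq (0%Z, 1%Z)), (fracq (7%Z, 45%Z)), (fracq (1%Z, 1%Z)), (fracq (2%Z, 45%Z))), ((fracq (1%Z, 1%Z)), (fracq (4%Z, 9%Z)), (fracq (0%Z, 1%Z)), (fracq (5%Z, 9%Z))), (fracq (1%Z, 2%Z)), (-2)%Z));
  (((-1)%Z, (-1)%Z, (0)%Z, (0)%Z), (((fracq (0%Z, 1%Z)), (fracq (0%Z, 1%Z)), (fracq (0%Z, 1%Z)), (fracq (1%Z, 1%Z))), ((fracq (5%Z, 8%Z)), (fracq (3%Z, 8%Z)), (fracq (5%Z, 8%Z)), (fracq (1%Z, 8%Z))), (fracq (1%Z, 5%Z)), (-1)%Z));
  (((-1)%Z, (-1)%Z, (0)%Z, (1)%Z), (((fracq (0%Z, 1%Z)), (fracq (0%Z, 1%Z)), (fracq (0%Z, 1%Z)), (fracq (1%Z, 1%Z))), ((fracq (2%Z, 3%Z)), (fracq (2%Z, 5%Z)), (fracq (2%Z, 3%Z)), (fracq (1%Z, 15%Z))), (fracq (1%Z, 4%Z)), (-1)%Z));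
  (((-1)%Z, (0)%Z, (0)%Z, (-1)%Z), (((fracq (0%Z, 1%Z)), (fracq (19%Z, 20%Z)), (fracq (1%Z, 1%Z)), (fracq (0%Z, 1%Z))), ((fracq (5%Z, 8%Z)), (fracq (11%Z, 80%Z)), (fracq (3%Z, 8%Z)), (fracq (3%Z, 8%Z))), (fracq (1%Z, 5%Z)), (-1)%Z));
  (((-1)%Z, (0)%Z, (0)%Z, (0)%Z), (((fracq (0%Z, 1%Z)), (fracq (1%Z, 9%Z)), (fracq (7%Z, 9%Z)), (fracq (3%Z, 5%Z))), ((fracq (1%Z, 1%Z)), (fracq (22%Z, 45%Z)), (fracq (2%Z, 9%Z)), (fracq (0%Z, 1%Z))), (fracq (1%Z, 2%Z)), (-1)%Z));
  (((-1)%Z, (0)%Z, (0)%Z, (1)%Z), (((fracq (0%Z, 1%Z)), (fracq (1%Z, 9%Z)), (fracq (7%Z, 9%Z)), (fracq (3%Z, 5%Z))), ((fracq (1%Z, 1%Z)), (fracq (22%Z, 45%Z)), (fracq (2%Z, 9%Z)), (fracq (0%Z, 1%Z))), (fracq (1%Z, 2%Z)), (-1)%Z));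
  (((-1)%Z, (1)%Z, (0)%Z, (0)%Z), (((fracq (0%Z, 1%Z)), (fracq (3%Z, 5%Z)), (fracq (17%Z, 25%Z)), (fracq (3%Z, 5%Z))), ((fracq (1%Z, 1%Z)), (fracq (0%Z, 1%Z)), (fracq (8%Z, 25%Z)), (fracq (0%Z, 1%Z))), (fracq (1%Z, 2%Z)), (-1)%Z));
  (((0)%Z, (-3)%Z, (0)%Z, (0)%Z), (((fracq (0%Z, 1%Z)), (fracq (0%Z, 1%Z)), (fracq (0%Z, 1%Z)), (fracq (1%Z, 1%Z))), ((fracq (5%Z, 9%Z)), (fracq (1%Z, 3%Z)), (fracq (5%Z, 9%Z)), (fracq (2%Z, 9%Z))), (fracq (1%Z, 10%Z)), (-1)%Z));
  (((0)%Z, (-2)%Z, (0)%Z, (-1)%Z), (((fracq (0%Z, 1%Z)), (fracq (0%Z, 1%Z)), (fracq (1%Z, 1%Z)), (fracq (0%Z, 1%Z))), ((fracq (5%Z, 9%Z)), (fracq (1%Z, 3%Z)), (fracq (4%Z, 9%Z)), (fracq (1%Z, 3%Z))), (fracq (1%Z, 10%Z)), (-1)%Z));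
  (((0)%Z, (-2)%Z, (0)%Z, (0)%Z), (((fracq (0%Z, 1%Z)), (fracq (0%Z, 1%Z)), (fracq (1%Z, 2%Z)), (fracq (3%Z, 4%Z))), ((fracq (5%Z, 6%Z)), (fracq (1%Z, 2%Z)), (fracq (1%Z, 2%Z)), (fracq (0%Z, 1%Z))), (fracq (2%Z, 5%Z)), (-1)%Z));
  (((0)%Z, (-2)%Z, (0)%Z, (1)%Z), (((fracq (0%Z, 1%Z)), (fracq (0%Z, 1%Z)), (fracq (1%Z, 2%Z)), (fracq (3%Z, 4%Z))), ((fracq (5%Z, 6%Z)), (fracq (1%Z, 2%Z)), (fracq (1%Z, 2%Z)), (fracq (0%Z, 1%Z))), (fracq (2%Z, 5%Z)), (-1)%Z));
  (((0)%Z, (-1)%Z, (-1)%Z, (-1)%Z), (((fracq (5%Z, 9%Z)), (fracq (37%Z, 162%Z)), (fracq (4%Z, 9%Z)), (fracq (53%Z, 162%Z))), ((fracq (0%Z, 1%Z)), (fracq (17%Z, 18%Z)), (fracq (1%Z, 1%Z)), (fracq (1%Z, 18%Z))), (fracq (9%Z, 10%Z)), (-2)%Z));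
  (((0)%Z, (-1)%Z, (-1)%Z, (0)%Z), (((fracq (0%Z, 1%Z)), (fracq (0%Z, 1%Z)), (fracq (0%Z, 1%Z)), (fracq (1%Z, 1%Z))), ((fracq (5%Z, 8%Z)), (fracq (3%Z, 8%Z)), (fracq (5%Z, 8%Z)), (fracq (1%Z, 8%Z))), (fracq (1%Z, 5%Z)), (-1)%Z));
  (((0)%Z, (-1)%Z, (0)%Z, (-2)%Z), (((fracq (0%Z, 1%Z)), (fracq (0%Z, 1%Z)), (fracq (1%Z, 1%Z)), (fracq (0%Z, 1%Z))), ((fracq (5%Z, 9%Z)), (fracq (1%Z, 3%Z)), (fracq (4%Z, 9%Z)), (fracq (1%Z, 3%Z))), (fracq (1%Z, 10%Z)), (-1)%Z));
  (((0)%Z, (-1)%Z, (0)%Z, (-1)%Z), (((fracq (0%Z, 1%Z)), (fracq (0%Z, 1%Z)), (fracq (1%Z, 1%Z)), (fracq (0%Z, 1%Z))), ((fracq (5%Z, 6%Z)), (fracq (1%Z, 2%Z)), (fracq (1%Z, 6%Z)), (fracq (1%Z, 2%Z))), (fracq (2%Z, 5%Z)), (-1)%Z));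
  (((0)%Z, (-1)%Z, (0)%Z, (0)%Z), (((fracq (5%Z, 7%Z)), (fracq (0%Z, 1%Z)), (fracq (5%Z, 7%Z)), (fracq (3%Z, 7%Z))), ((fracq (0%Z, 1%Z)), (fracq (1%Z, 1%Z)), (fracq (0%Z, 1%Z)), (fracq (0%Z, 1%Z))), (fracq (7%Z, 10%Z)), (-1)%Z));
  (((0)%Z, (-1)%Z, (0)%Z, (2)%Z), (((fracq (0%Z, 1%Z)), (fracq (0%Z, 1%Z)), (fracq (0%Z, 1%Z)), (fracq (1%Z, 1%Z))), ((fracq (10%Z, 17%Z)), (fracq (6%Z, 17%Z)), (fracq (10%Z, 17%Z)), (fracq (3%Z, 17%Z))), (fracq (3%Z, 20%Z)), (0)%Z));
  (((0)%Z, (-1)%Z, (1)%Z, (0)%Z), (((fracq (0%Z, 1%Z)), (fracq (0%Z, 1%Z)), (fracq (1%Z, 1%Z)), (fracq (1%Z, 2%Z))), ((fracq (5%Z, 8%Z)), (fracq (3%Z, 8%Z)), (fracq (3%Z, 8%Z)), (fracq (1%Z, 4%Z))), (fracq (1%Z, 5%Z)), (0)%Z));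
  (((0)%Z, (-1)%Z, (1)%Z, (1)%Z), (((fracq (0%Z, 1%Z)), (fracq (0%Z, 1%Z)), (fracq (1%Z, 1%Z)), (fracq (1%Z, 2%Z))), ((fracq (3%Z, 4%Z)), (fracq (9%Z, 20%Z)), (fracq (1%Z, 4%Z)), (fracq (1%Z, 5%Z))), (fracq (1%Z, 3%Z)), (0)%Z));
  (((0)%Z, (0)%Z, (-1)%Z, (-2)%Z), (((fracq (90%Z, 101%Z)), (fracq (54%Z, 101%Z)), (fracq (40%Z, 101%Z)), (fracq (0%Z, 1%Z))), ((fracq (0%Z, 1%Z)), (fracq (0%Z, 1%Z)), (fracq (50%Z, 79%Z)), (fracq (54%Z, 79%Z))), (fracq (101%Z, 180%Z)), (-2)%Z));
  (((0)%Z, (0)%Z, (-1)%Z, (-1)%Z), (((fracq (0%Z, 1%Z)), (fracq (1%Z, 1%Z)), (fracq (0%Z, 1%Z)), (fracq (0%Z, 1%Z))), ((fracq (5%Z, 8%Z)), (fracq (1%Z, 8%Z)), (fracq (5%Z, 8%Z)), (fracq (3%Z, 8%Z))), (fracq (1%Z, 5%Z)), (-1)%Z));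
  (((0)%Z, (0)%Z, (-1)%Z, (0)%Z), (((fracq (17%Z, 25%Z)), (fracq (3%Z, 5%Z)), (fracq (0%Z, 1%Z)), (fracq (3%Z, 5%Z))), ((fracq (8%Z, 25%Z)), (fracq (0%Z, 1%Z)), (fracq (1%Z, 1%Z)), (fracq (0%Z, 1%Z))), (fracq (1%Z, 2%Z)), (-1)%Z));
  (((0)%Z, (0)%Z, (-1)%Z, (1)%Z), (((fracq (17%Z, 25%Z)), (fracq (3%Z, 5%Z)), (fracq (0%Z, 1%Z)), (fracq (3%Z, 5%Z))), ((fracq (8%Z, 25%Z)), (fracq (0%Z, 1%Z)), (fracq (1%Z, 1%Z)), (fracq (0%Z, 1%Z))), (fracq (1%Z, 2%Z)), (-1)%Z));
  (((0)%Z, (0)%Z, (0)%Z, (-3)%Z), (((fracq (0%Z, 1%Z)), (fracq (19%Z, 20%Z)), (fracq (1%Z, 1%Z)), (fracq (0%Z, 1%Z))), ((fracq (5%Z, 9%Z)), (fracq (41%Z, 180%Z)), (fracq (4%Z, 9%Z)), (fracq (1%Z, 3%Z))), (fracq (1%Z, 10%Z)), (-1)%Z));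
  (((0)%Z, (0)%Z, (0)%Z, (-2)%Z), (((fracq (2%Z, 5%Z)), (fracq (3%Z, 4%Z)), (fracq (1%Z, 1%Z)), (fracq (0%Z, 1%Z))), ((fracq (17%Z, 30%Z)), (fracq (0%Z, 1%Z)), (fracq (1%Z, 6%Z)), (fracq (1%Z, 2%Z))), (fracq (2%Z, 5%Z)), (-1)%Z));
  (((0)%Z, (0)%Z, (0)%Z, (-1)%Z), (((fracq (5%Z, 7%Z)), (fracq (3%Z, 7%Z)), (fracq (5%Z, 7%Z)), (fracq (0%Z, 1%Z))), ((fracq (0%Z, 1%Z)), (fracq (0%Z, 1%Z)), (fracq (0%Z, 1%Z)), (fracq (1%Z, 1%Z))), (fracq (7%Z, 10%Z)), (-1)%Z));
  (((0)%Z, (0)%Z, (0)%Z, (1)%Z), (((fracq (0%Z, 1%Z)), (fracq (0%Z, 1%Z)), (fracq (0%Z, 1%Z)), (fracq (1%Z, 1%Z))), ((fracq (5%Z, 7%Z)), (fracq (3%Z, 7%Z)), (fracq (5%Z, 7%Z)), (fracq (0%Z, 1%Z))), (fracq (3%Z, 10%Z)), (0)%Z));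
  (((0)%Z, (0)%Z, (0)%Z, (2)%Z), (((fracq (0%Z, 1%Z)), (fracq (0%Z, 1%Z)), (fracq (0%Z, 1%Z)), (fracq (1%Z, 1%Z))), ((fracq (5%Z, 7%Z)), (fracq (3%Z, 7%Z)), (fracq (5%Z, 7%Z)), (fracq (0%Z, 1%Z))), (fracq (3%Z, 10%Z)), (0)%Z));
  (((0)%Z, (0)%Z, (0)%Z, (3)%Z), (((fracq (0%Z, 1%Z)), (fracq (0%Z, 1%Z)), (fracq (0%Z, 1%Z)), (fracq (1%Z, 1%Z))), ((fracq (5%Z, 7%Z)), (fracq (3%Z, 7%Z)), (fracq (5%Z, 7%Z)), (fracq (0%Z, 1%Z))), (fracq (3%Z, 10%Z)), (0)%Z));
  (((0)%Z, (0)%Z, (1)%Z, (-1)%Z), (((fracq (0%Z, 1%Z)), (fracq (19%Z, 20%Z)), (fracq (1%Z, 1%Z)), (fracq (0%Z, 1%Z))), ((fracq (5%Z, 8%Z)), (fracq (11%Z, 80%Z)), (fracq (3%Z, 8%Z)), (fracq (3%Z, 8%Z))), (fracq (1%Z, 5%Z)), (0)%Z));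
  (((0)%Z, (0)%Z, (1)%Z, (0)%Z), (((fracq (0%Z, 1%Z)), (fracq (1%Z, 9%Z)), (fracq (1%Z, 1%Z)), (fracq (22%Z, 45%Z))), ((fracq (1%Z, 1%Z)), (fracq (22%Z, 45%Z)), (fracq (0%Z, 1%Z)), (fracq (1%Z, 9%Z))), (fracq (1%Z, 2%Z)), (0)%Z));
  (((0)%Z, (0)%Z, (1)%Z, (1)%Z), (((fracq (11%Z, 101%Z)), (fracq (29%Z, 202%Z)), (fracq (90%Z, 101%Z)), (fracq (54%Z, 101%Z))), ((fracq (1%Z, 1%Z)), (fracq (1%Z, 2%Z)), (fracq (0%Z, 1%Z)), (fracq (0%Z, 1%Z))), (fracq (101%Z, 180%Z)), (0)%Z));
  (((0)%Z, (0)%Z, (1)%Z, (2)%Z), (((fracq (0%Z, 1%Z)), (fracq (0%Z, 1%Z)), (fracq (0%Z, 1%Z)), (fracq (1%Z, 1%Z))), ((fracq (5%Z, 9%Z)), (fracq (1%Z, 3%Z)), (fracq (5%Z, 9%Z)), (fracq (2%Z, 9%Z))), (fracq (1%Z, 10%Z)), (1)%Z));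
  (((0)%Z, (1)%Z, (-1)%Z, (-1)%Z), (((fracq (17%Z, 25%Z)), (fracq (3%Z, 5%Z)), (fracq (0%Z, 1%Z)), (fracq (3%Z, 5%Z))), ((fracq (8%Z, 25%Z)), (fracq (0%Z, 1%Z)), (fracq (1%Z, 1%Z)), (fracq (0%Z, 1%Z))), (fracq (1%Z, 2%Z)), (-1)%Z));
  (((0)%Z, (1)%Z, (-1)%Z, (0)%Z), (((fracq (17%Z, 25%Z)), (fracq (3%Z, 5%Z)), (fracq (0%Z, 1%Z)), (fracq (3%Z, 5%Z))), ((fracq (8%Z, 25%Z)), (fracq (0%Z, 1%Z)), (fracq (1%Z, 1%Z)), (fracq (0%Z, 1%Z))), (fracq (1%Z, 2%Z)), (-1)%Z));
  (((0)%Z, (1)%Z, (0)%Z, (-2)%Z), (((fracq (1%Z, 2%Z)), (fracq (3%Z, 4%Z)), (fracq (0%Z, 1%Z)), (fracq (0%Z, 1%Z))), ((fracq (1%Z, 2%Z)), (fracq (0%Z, 1%Z)), (fracq (5%Z, 6%Z)), (fracq (1%Z, 2%Z))), (fracq (2%Z, 5%Z)), (-1)%Z));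
  (((0)%Z, (1)%Z, (0)%Z, (0)%Z), (((fracq (0%Z, 1%Z)), (fracq (1%Z, 1%Z)), (fracq (0%Z, 1%Z)), (fracq (0%Z, 1%Z))), ((fracq (5%Z, 7%Z)), (fracq (0%Z, 1%Z)), (fracq (5%Z, 7%Z)), (fracq (3%Z, 7%Z))), (fracq (3%Z, 10%Z)), (0)%Z));
  (((0)%Z, (1)%Z, (0)%Z, (1)%Z), (((fracq (0%Z, 1%Z)), (fracq (10%Z, 11%Z)), (fracq (0%Z, 1%Z)), (fracq (10%Z, 11%Z))), ((fracq (50%Z, 67%Z)), (fracq (0%Z, 1%Z)), (fracq (50%Z, 67%Z)), (fracq (0%Z, 1%Z))), (fracq (33%Z, 100%Z)), (0)%Z));
  (((0)%Z, (1)%Z, (0)%Z, (2)%Z), (((fracq (0%Z, 1%Z)), (fracq (10%Z, 11%Z)), (fracq (0%Z, 1%Z)), (fracq (10%Z, 11%Z))), ((fracq (50%Z, 67%Z)), (fracq (0%Z, 1%Z)), (fracq (50%Z, 67%Z)), (fracq (0%Z, 1%Z))), (fracq (33%Z, 100%Z)), (0)%Z));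
  (((0)%Z, (1)%Z, (1)%Z, (0)%Z), (((fracq (0%Z, 1%Z)), (fracq (3%Z, 5%Z)), (fracq (1%Z, 1%Z)), (fracq (11%Z, 25%Z))), ((fracq (1%Z, 1%Z)), (fracq (0%Z, 1%Z)), (fracq (0%Z, 1%Z)), (fracq (4%Z, 25%Z))), (fracq (1%Z, 2%Z)), (0)%Z));
  (((0)%Z, (1)%Z, (1)%Z, (1)%Z), (((fracq (0%Z, 1%Z)), (fracq (5%Z, 9%Z)), (fracq (1%Z, 1%Z)), (fracq (4%Z, 9%Z))), ((fracq (5%Z, 9%Z)), (fracq (22%Z, 81%Z)), (fracq (4%Z, 9%Z)), (fracq (23%Z, 81%Z))), (fracq (1%Z, 10%Z)), (1)%Z));
  (((0)%Z, (2)%Z, (0)%Z, (-1)%Z), (((fracq (0%Z, 1%Z)), (fracq (10%Z, 11%Z)), (fracq (1%Z, 1%Z)), (fracq (9%Z, 22%Z))), ((fracq (155%Z, 244%Z)), (fracq (33%Z, 244%Z)), (fracq (89%Z, 244%Z)), (fracq (33%Z, 122%Z))), (fracq (33%Z, 155%Z)), (0)%Z));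
  (((0)%Z, (2)%Z, (0)%Z, (0)%Z), (((fracq (0%Z, 1%Z)), (fracq (10%Z, 11%Z)), (fracq (0%Z, 1%Z)), (fracq (10%Z, 11%Z))), ((fracq (50%Z, 67%Z)), (fracq (0%Z, 1%Z)), (fracq (50%Z, 67%Z)), (fracq (0%Z, 1%Z))), (fracq (33%Z, 100%Z)), (0)%Z));
  (((0)%Z, (2)%Z, (0)%Z, (1)%Z), (((fracq (0%Z, 1%Z)), (fracq (10%Z, 11%Z)), (fracq (0%Z, 1%Z)), (fracq (10%Z, 11%Z))), ((fracq (50%Z, 67%Z)), (fracq (0%Z, 1%Z)), (fracq (50%Z, 67%Z)), (fracq (0%Z, 1%Z))), (fracq (33%Z, 100%Z)), (0)%Z));
  (((0)%Z, (3)%Z, (0)%Z, (0)%Z), (((fracq (0%Z, 1%Z)), (fracq (10%Z, 11%Z)), (fracq (0%Z, 1%Z)), (fracq (10%Z, 11%Z))), ((fracq (50%Z, 67%Z)), (fracq (0%Z, 1%Z)), (fracq (50%Z, 67%Z)), (fracq (0%Z, 1%Z))), (fracq (33%Z, 100%Z)), (0)%Z));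
  (((1)%Z, (-1)%Z, (0)%Z, (0)%Z), (((fracq (1%Z, 1%Z)), (fracq (0%Z, 1%Z)), (fracq (0%Z, 1%Z)), (fracq (19%Z, 20%Z))), ((fracq (3%Z, 8%Z)), (fracq (3%Z, 8%Z)), (fracq (5%Z, 8%Z)), (fracq (11%Z, 80%Z))), (fracq (1%Z, 5%Z)), (0)%Z));
  (((1)%Z, (0)%Z, (0)%Z, (-1)%Z), (((fracq (1%Z, 1%Z)), (fracq (1%Z, 2%Z)), (fracq (0%Z, 1%Z)), (fracq (0%Z, 1%Z))), ((fracq (3%Z, 8%Z)), (fracq (1%Z, 4%Z)), (fracq (5%Z, 8%Z)), (fracq (3%Z, 8%Z))), (fracq (1%Z, 5%Z)), (0)%Z));
  (((1)%Z, (0)%Z, (0)%Z, (0)%Z), (((fracq (1%Z, 1%Z)), (fracq (9%Z, 22%Z)), (fracq (34%Z, 55%Z)), (fracq (3%Z, 5%Z))), ((fracq (0%Z, 1%Z)), (fracq (21%Z, 110%Z)), (fracq (21%Z, 55%Z)), (fracq (0%Z, 1%Z))), (fracq (1%Z, 2%Z)), (0)%Z));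
  (((1)%Z, (0)%Z, (0)%Z, (1)%Z), (((fracq (1%Z, 1%Z)), (fracq (9%Z, 22%Z)), (fracq (34%Z, 55%Z)), (fracq (3%Z, 5%Z))), ((fracq (0%Z, 1%Z)), (fracq (21%Z, 110%Z)), (fracq (21%Z, 55%Z)), (fracq (0%Z, 1%Z))), (fracq (1%Z, 2%Z)), (0)%Z));
  (((1)%Z, (1)%Z, (0)%Z, (-1)%Z), (((fracq (1%Z, 1%Z)), (fracq (9%Z, 22%Z)), (fracq (1%Z, 1%Z)), (fracq (9%Z, 22%Z))), ((fracq (0%Z, 1%Z)), (fracq (21%Z, 110%Z)), (fracq (0%Z, 1%Z)), (fracq (21%Z, 110%Z))), (fracq (1%Z, 2%Z)), (0)%Z));
  (((1)%Z, (1)%Z, (0)%Z, (0)%Z), (((fracq (100%Z, 121%Z)), (fracq (60%Z, 121%Z)), (fracq (100%Z, 121%Z)), (fracq (60%Z, 121%Z))), ((fracq (0%Z, 1%Z)), (fracq (0%Z, 1%Z)), (fracq (0%Z, 1%Z)), (fracq (0%Z, 1%Z))), (fracq (121%Z, 200%Z)), (0)%Z));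
  (((1)%Z, (1)%Z, (0)%Z, (1)%Z), (((fracq (1%Z, 1%Z)), (fracq (1%Z, 18%Z)), (fracq (0%Z, 1%Z)), (fracq (17%Z, 18%Z))), ((fracq (4%Z, 9%Z)), (fracq (53%Z, 162%Z)), (fracq (5%Z, 9%Z)), (fracq (37%Z, 162%Z))), (fracq (1%Z, 10%Z)), (1)%Z));
  (((1)%Z, (2)%Z, (0)%Z, (0)%Z), (((fracq (0%Z, 1%Z)), (fracq (1%Z, 1%Z)), (fracq (0%Z, 1%Z)), (fracq (0%Z, 1%Z))), ((fracq (5%Z, 9%Z)), (fracq (2%Z, 9%Z)), (fracq (5%Z, 9%Z)), (fracq (1%Z, 3%Z))), (fracq (1%Z, 10%Z)), (1)%Z))].
Definition Kl : seq int4 := [:: ((-1)%Z, (-2)%Z, (0)%Z, (0)%Z);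
  ((-1)%Z, (-1)%Z, (0)%Z, (-1)%Z);
  ((-1)%Z, (-1)%Z, (0)%Z, (0)%Z);
  ((-1)%Z, (-1)%Z, (0)%Z, (1)%Z);
  ((-1)%Z, (0)%Z, (0)%Z, (-1)%Z);
  ((-1)%Z, (0)%Z, (0)%Z, (0)%Z);
  ((-1)%Z, (0)%Z, (0)%Z, (1)%Z);
  ((-1)%Z, (1)%Z, (0)%Z, (0)%Z);
  ((0)%Z, (-3)%Z, (0)%Z, (0)%Z);
  ((0)%Z, (-2)%Z, (0)%Z, (-1)%Z);
  ((0)%Z, (-2)%Z, (0)%Z, (0)%Z);
  ((0)%Z, (-2)%Z, (0)%Z, (1)%Z);
  ((0)%Z, (-1)%Z, (-1)%Z, (-1)%Z);
  ((0)%Z, (-1)%Z, (-1)%Z, (0)%Z);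
  ((0)%Z, (-1)%Z, (0)%Z, (-2)%Z);
  ((0)%Z, (-1)%Z, (0)%Z, (-1)%Z);
  ((0)%Z, (-1)%Z, (0)%Z, (0)%Z);
  ((0)%Z, (-1)%Z, (0)%Z, (2)%Z);
  ((0)%Z, (-1)%Z, (1)%Z, (0)%Z);
  ((0)%Z, (-1)%Z, (1)%Z, (1)%Z);
  ((0)%Z, (0)%Z, (-1)%Z, (-2)%Z);
  ((0)%Z, (0)%Z, (-1)%Z, (-1)%Z);
  ((0)%Z, (0)%Z, (-1)%Z, (0)%Z);
  ((0)%Z, (0)%Z, (-1)%Z, (1)%Z);
  ((0)%Z, (0)%Z, (0)%Z, (-3)%Z);
  ((0)%Z, (0)%Z, (0)%Z, (-2)%Z);
  ((0)%Z, (0)%Z, (0)%Z, (-1)%Z);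
  ((0)%Z, (0)%Z, (0)%Z, (1)%Z);
  ((0)%Z, (0)%Z, (0)%Z, (2)%Z);
  ((0)%Z, (0)%Z, (0)%Z, (3)%Z);
  ((0)%Z, (0)%Z, (1)%Z, (-1)%Z);
  ((0)%Z, (0)%Z, (1)%Z, (0)%Z);
  ((0)%Z, (0)%Z, (1)%Z, (1)%Z);
  ((0)%Z, (0)%Z, (1)%Z, (2)%Z);
  ((0)%Z, (1)%Z, (-1)%Z, (-1)%Z);
  ((0)%Z, (1)%Z, (-1)%Z, (0)%Z);
  ((0)%Z, (1)%Z, (0)%Z, (-2)%Z);
  ((0)%Z, (1)%Z, (0)%Z, (0)%Z);
  ((0)%Z, (1)%Z, (0)%Z, (1)%Z);
  ((0)%Z, (1)%Z, (0)%Z, (2)%Z);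
  ((0)%Z, (1)%Z, (1)%Z, (0)%Z);
  ((0)%Z, (1)%Z, (1)%Z, (1)%Z);
  ((0)%Z, (2)%Z, (0)%Z, (-1)%Z);
  ((0)%Z, (2)%Z, (0)%Z, (0)%Z);
  ((0)%Z, (2)%Z, (0)%Z, (1)%Z);
  ((0)%Z, (3)%Z, (0)%Z, (0)%Z);
  ((1)%Z, (-1)%Z, (0)%Z, (0)%Z);
  ((1)%Z, (0)%Z, (0)%Z, (-1)%Z);
  ((1)%Z, (0)%Z, (0)%Z, (0)%Z);
  ((1)%Z, (0)%Z, (0)%Z, (1)%Z);
  ((1)%Z, (1)%Z, (0)%Z, (-1)%Z);
  ((1)%Z, (1)%Z, (0)%Z, (0)%Z);
  ((1)%Z, (1)%Z, (0)%Z, (1)%Z);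
  ((1)%Z, (2)%Z, (0)%Z, (0)%Z)].
Lemma Dl_ok : all (fun d => [&& PLq (dirp 1 d), PLq (dirp (-1) d) &
   eqcomb (1%:R / 2%:R) (dirp 1 d) (dirp (-1) d)]) Dl.
Proof. by vm_compute. Qed.

Lemma dir_branch (R : realType) pi (pi0 : int) d :
  d \in Dl -> 20 <= dotz (Epi pi) d ->
  (pi0%:~R < ratr (dotq (Epi pi) Yq) :> R) -> (ratr (dotq (Epi pi) Yq) < pi0%:~R + 1 :> R) ->
  conv (fun p => PL p /\ ~ split_set pi pi0 p) (mkq R Yq).
Proof.
move=> hd h20 H1 H2.
have /and3P[hA hB hc] := allP Dl_ok d hd.
have key : forall s, dotq (Epi pi) (dirp s d) = dotq (Epi pi) Yq + s * (dotz (Epi pi) d)%:~R / 20.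
  move=> s; case: (Epi pi) => [[[e1 e2] e3] e4]; case: d {hd h20 hA hB hc} => [[[d1 d2] d3] d4].
  rewrite /dotq /dirp /dotz /= !intrD !intrM; ring.
have t : (20%:Z)%:~R <= (dotz (Epi pi) d)%:~R :> rat by rewrite ler_int.
apply: (two_point hA hB _ hc).
- by vm_compute.
- have : dotq (Epi pi) Yq + 1 <= dotq (Epi pi) (dirp 1 d) by rewrite key; lra.
  move/(ratr_le R); rewrite rmorphD rmorph1; lra.
- have : dotq (Epi pi) (dirp (-1) d) <= dotq (Epi pi) Yq - 1 by rewrite key; lra.
  move/(ratr_le R); rewrite rmorphB rmorph1; lra.
Qed.

Lemma cert_branch (R : realType) pi (pi0 : int) C :
  cert_ok (Epi pi) C ->
  (pi0%:~R < ratr (dotq (Epi pi) Yq) :> R) -> (ratr (dotq (Epi pi) Yq) < pi0%:~R + 1 :> R) ->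
  conv (fun p => PL p /\ ~ split_set pi pi0 p) (mkq R Yq).
Proof.
case: C => [[[A B] l] c] /=.
move=> /and4P[hA hB hl /and4P[hE hcA hcB /andP[hc1 hc2]]] H1 H2.
have e : pi0 = c.
  move/(ratr_lt R): hc1; move/(ratr_lt R): hc2; rewrite rmorphD rmorph1 !rmorph_int => hc2' hc1'.
  have h1 : (pi0%:~R : R) < (c + 1)%:~R by rewrite intrD; lra.
  have h2 : (c%:~R : R) < (pi0 + 1)%:~R by rewrite intrD; lra.
  rewrite ltr_int in h1; rewrite ltr_int in h2; lia.
subst pi0; apply: (two_point hA hB hl hE).
- by move/(ratr_le R): hcA; rewrite rmorphD rmorph1 rmorph_int.
- by move/(ratr_le R): hcB; rewrite rmorph_int.
Qed.

Lemma dvd_branch (R : realType) pi (pi0 : int) :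
  (10 %| dotz (Epi pi) Y10)%Z ->
  (pi0%:~R < ratr (dotq (Epi pi) Yq) :> R) -> (ratr (dotq (Epi pi) Yq) < pi0%:~R + 1 :> R) ->
  False.
Proof.
move=> /dvdzP[q hq] H1 H2.
have e : dotq (Epi pi) Yq = q%:~R.
  have -> : dotq (Epi pi) Yq = (dotz (Epi pi) Y10)%:~R / 10.
    case: (Epi pi) => [[[e1 e2] e3] e4]; rewrite /dotq /dotz /Yq /= !intrD !intrM.
    by field.
  by rewrite hq intrM; field.
move: H1 H2; rewrite e rmorph_int => H1 H2.
have h1 : (pi0%:~R : R) < q%:~R by [].
have h2 : (q%:~R : R) < (pi0 + 1)%:~R by rewrite intrD.
rewrite ltr_int in h1; rewrite ltr_int in h2; lia.
Qed.
Definition r2 : seq int := [:: (-2)%Z; (-1)%Z; 0%Z; 1%Z; 2%Z].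
Definition r3 : seq int := [:: (-3)%Z; (-2)%Z; (-1)%Z; 0%Z; 1%Z; 2%Z; 3%Z].

Definition good (E : int4) : bool :=
  if has (fun d => 20 <= dotz E d) Dl then true else
  if (10 %| dotz E Y10)%Z then true else
  if E \in Kl then has (fun p => if p.1 == E then cert_ok E p.2 else false) Cl else false.

Lemma goodP E : good E ->
  [\/ has (fun d => 20 <= dotz E d) Dl, (10 %| dotz E Y10)%Z |
      has (fun p => if p.1 == E then cert_ok E p.2 else false) Cl].
Proof.
rewrite /good; case: ifP => [h _|_]; first by apply: Or31.
case: ifP => [h _|_]; first by apply: Or32.
by case: ifP => // _ h; apply: Or33.
Qed.

Lemma box_ok : all (fun a => all (fun b => all (fun c => all (fun d =>
  good (a, b, c, d)) r3) r2) r3) r2.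
Proof. by vm_compute. Qed.

Lemma good_all E : good E.
Proof.
case: E => [[[e1 e2] e3] e4].
case Hd: (has (fun d => 20 <= dotz (e1, e2, e3, e4) d) Dl); first by rewrite /good Hd.
move/negbT: Hd; rewrite -all_predC /= => Hd.
repeat (case/andP: Hd => ? Hd).
have m1 : e1 \in r2 by rewrite !inE; lia.
have m2 : e2 \in r3 by rewrite !inE; lia.
have m3 : e3 \in r2 by rewrite !inE; lia.
have m4 : e4 \in r3 by rewrite !inE; lia.
by move: box_ok => /allP/(_ e1 m1)/allP/(_ e2 m2)/allP/(_ e3 m3)/allP/(_ e4 m4).
Qed.
Lemma Yq_ok : PLq Yq.
Proof. by vm_compute. Qed.

Lemma SC_PL (R : realType) : split_closure (@PL R) (mkq R Yq).
Proof.
move=> pi pi0.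
case Hs: (pi0%:~R < \sum_(i < 2 + 4) (pi i)%:~R * mkq R Yq i < (pi0 + 1)%:~R).
- move: Hs; rewrite splitval_q intrD => /andP[H1 H2].
  case: (goodP (good_all (Epi pi))) => [hd | hdv | hc].
  + case/hasP: hd => d hd h20; exact: dir_branch hd h20 H1 H2.
  + by case: (dvd_branch hdv H1 H2).
  + case/hasP: hc => [[E C]] _ /=; case: ifP => // _ hC; exact: cert_branch hC H1 H2.
- apply: conv1; split; first exact: PLq_PL Yq_ok.
  by rewrite /split_set Hs.
Qed.

Definition pi3 : 'I_(2 + 4) -> int := fun i => if val i == 3%N then 1%Z else 0%Z.
Definition pi5 : 'I_(2 + 4) -> int := fun i => if val i == 5%N then 1%Z else 0%Z.

Lemma cutA (R : realType) (p : pt R (2 + 4)) :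
  PLplus p /\ ~ split_set pi3 0 p ->
  \sum_(i < 2 + 4) nth 0 [:: 1/2; 1/2; -1/2; 0; 1/2; 0] i * p i <= 1.
Proof.
move=> [[[[hx [h1 h2]] [hz [e1 e2]]] [s1 s2]] hns].
rewrite sum6 /=.
move: (hx i0) (hx i1) (hz j0) (hz j1) (hz j2) (hz j3).
rewrite /xc /zc in e1 e2 s1 s2 h1 h2 *.
move=> /andP[a1 a2] /andP[b1 b2] /andP[c1 c2] /andP[d1 d2] /andP[f1 f2] /andP[g1 g2].
have hz2 : p (rshift 2 j1) <= 0 \/ 1 <= p (rshift 2 j1).
  case: (lerP (p (rshift 2 j1)) 0) => hA; first by left.
  case: (lerP 1 (p (rshift 2 j1))) => hB; first by right.
  exfalso; apply: hns; rewrite /split_set sum6 /pi3 /=.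
  apply/andP; split; lra.
case: hz2 => hz2; lra.
Qed.

Lemma cutB (R : realType) (p : pt R (2 + 4)) :
  PLplus p /\ ~ split_set pi5 0 p ->
  \sum_(i < 2 + 4) nth 0 [:: 1/2; 1/2; 1/2; 0; -1/2; 0] i * p i <= 1.
Proof.
move=> [[[[hx [h1 h2]] [hz [e1 e2]]] [s1 s2]] hns].
rewrite sum6 /=.
move: (hx i0) (hx i1) (hz j0) (hz j1) (hz j2) (hz j3).
rewrite /xc /zc in e1 e2 s1 s2 h1 h2 *.
move=> /andP[a1 a2] /andP[b1 b2] /andP[c1 c2] /andP[d1 d2] /andP[f1 f2] /andP[g1 g2].
have hz2 : p (rshift 2 j3) <= 0 \/ 1 <= p (rshift 2 j3).
  case: (lerP (p (rshift 2 j3)) 0) => hA; first by left.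
  case: (lerP 1 (p (rshift 2 j3))) => hB; first by right.
  exfalso; apply: hns; rewrite /split_set sum6 /pi5 /=.
  apply/andP; split; lra.
case: hz2 => hz2; lra.
Qed.

Lemma not_SC_plus (R : realType) (y : pt R (2 + 4)) :
  split_closure (@PLplus R) y -> xc y i0 + xc y i1 <= 2.
Proof.
move=> H.
have h1 := lin_conv (@cutA R) (H pi3 0%Z).
have h2 := lin_conv (@cutB R) (H pi5 0%Z).
move: h1 h2; rewrite !sum6 /xc /=; lra.
Qed.

Theorem theorem4 (R : realType) :
  (forall x : pt R 2, proj_x (split_closure (@PLplus R)) x ->
                      proj_x (split_closure (@PL R)) x) /\
  (exists x : pt R 2, proj_x (split_closure (@PL R)) x /\
                      ~ proj_x (split_closure (@PLplus R)) x).
Proof.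
split.
- move=> x [y [hy hx]]; exists y; split => //.
  move=> pi pi0; case: (hy pi pi0) => k [lam [p [h1 [h2 [h3 h4]]]]].
  exists k, lam, p; split => //; split => //; split => // j.
  by case: (h3 j) => [[hPL _] hs]; split.
- exists (fun i => xc (mkq R Yq) i); split.
  + by exists (mkq R Yq); split; [exact: SC_PL | by []].
  + move=> [y [hy hx]]; have := not_SC_plus hy; rewrite !hx /xc /mkq /Yq /mk /=.
    have : ratr (2%:R : rat) < ratr (1%:R / 2%:R + 3%:R / 10%:R + 3%:R / 10%:R
                   + 1%:R / 2%:R + 3%:R / 10%:R + 3%:R / 10%:R) :> R.
      by rewrite ltr_rat; vm_compute.
    rewrite !rmorphD ?rmorph1 ?rmorph_nat; lra.
Qed.
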